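(* Let $m\ge2$ and let $\tau$ be a labeled rooted tree on vertex set $[1,m]$. Then for all integers $n$ and $l,a\ge1$, $$E_\tau^{(l+a,n)}=\sum_{\mu\in\mathcal M_\tau}\mathcal E_\tau^{\mu}(a;\,n-l\to n).$$
   Context: Fix $\beta\in(0,1)$ and sufficiently smooth losses $L^{(s)}$ (for integer $s<0$ the corresponding terms never occur since sums are empty). $\nabla^kF$ is the $k$-th derivative (symmetric $k$-linear map). Empty sums are $0$. For a rooted tree $\tau$ whose root has children subtrees $\tau_1,\dots,\tau_\ell$ ($\ell\ge0$), integer $n$ and integer $l\ge1$, define recursively $$E_\tau^{(l,n)}(\theta)=\sum_{b=0}^{n-l}\beta^b\nabla^{\ell+1}L^{(n-l-b)}(\theta)\Big[\sum_{l_1=1}^{l+b}E_{\tau_1}^{(l_1,n)}(\theta),\dots,\sum_{l_\ell=1}^{l+b}E_{\tau_\ell}^{(l_\ell,n)}(\theta)\Big]$$ (it depends only on the isomorphism class of $\tau$). A marking $\mu$ of a labeled rooted tree $\tau$ is a set of non-root vertices such that no marked vertex has another marked vertex in its subtree (i.e., no marked vertex is a descendant of another); $\mathcal M_\tau$ is the set of all markings (including $\varnothing$). For a labeled rooted tree $\tau$ with root $r$, children $v_1,\dots,v_\ell$ of $r$, subtrees $\tau_1,\dots,\tau_\ell$ rooted at them with vertex sets $V_1,\dots,V_\ell$, a marking $\mu\in\mathcal M_\tau$, and integers $n$, $l\ge1$, $a\ge1$, define recursively $$\mathcal E_\tau^{\mu}(a;\,n-l\to n)=\sum_{b=0}^{n-l-a}\beta^b\nabla^{\ell+1}L^{(n-l-a-b)}\big[X_1,\dots,X_\ell\big],$$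 where $X_s=\sum_{l'=1}^{l}E_{\tau_s}^{(l',n)}$ if $v_s\in\mu$, and $X_s=\sum_{l'=1}^{a+b}\mathcal E_{\tau_s}^{\mu\cap V_s}(l';\,n-l\to n)$ if $v_s\notin\mu$. (For a single-vertex tree and $\mu=\varnothing$ this gives $\sum_{b=0}^{n-l-a}\beta^b\nabla L^{(n-l-a-b)}$.) *)

(* Defs.v *)
From HB Require Import structures.
From mathcomp Require Import all_boot all_order all_algebra.
Set Implicit Arguments. Unset Strict Implicit. Unset Printing Implicit Defensive.
Import Order.TTheory GRing.Theory Num.Theory.
Local Open Scope ring_scope.

Inductive tree : Type := Node of nat & seq tree.

Definition root (t : tree) : nat := let: Node x _ := t in x.
Definition children (t : tree) : seq tree := let: Node _ ts := t in ts.

Fixpoint labels (t : tree) : seq nat :=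
  let: Node x ts := t in x :: flatten (map labels ts).

Fixpoint subtrees (t : tree) : seq tree :=
  let: Node _ ts := t in t :: flatten (map subtrees ts).

Definition nonroot_labels (t : tree) : seq nat :=
  flatten (map labels (children t)).

Definition desc (t : tree) (x : nat) : seq nat :=
  flatten [seq nonroot_labels s | s <- subtrees t & root s == x].

Definition wf_tree (m : nat) (t : tree) : bool := perm_eq (labels t) (iota 1 m).

Definition is_marking (k : nat) (t : tree) (mu : {set 'I_k}) : bool :=
  [forall i in mu, (val i \in nonroot_labels t) &&
     [forall j in mu, val j \notin desc t (val i)]].

(* number of terms of the sum  sum_{b=0}^{N}  (zero if N < 0) *)
Definition nterms (N : int) : nat := if (0 <= N)%R then (`|N|%N).+1 else 0%N.

(* D s theta xs  stands for  nabla^{size xs + 1} L^{(s)}(theta) [xs]  *)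
Section Defs.
Variables (R : realFieldType) (V : lmodType R).

Fixpoint E (beta : R) (D : int -> V -> seq V -> V) (theta : V)
    (t : tree) (l : nat) (n : int) : V :=
  let: Node _ ts := t in
  \sum_(b < nterms (n - l%:Z))
     beta ^+ b *: D (n - l%:Z - b%:Z) theta
       (map (fun s => \sum_(1 <= l1 < (l + b).+1) E beta D theta s l1 n) ts).

Fixpoint calE (beta : R) (D : int -> V -> seq V -> V) (theta : V)
    (k : nat) (t : tree) (mu : {set 'I_k}) (a l : nat) (n : int) : V :=
  let: Node _ ts := t in
  \sum_(b < nterms (n - l%:Z - a%:Z))
     beta ^+ b *: D (n - l%:Z - a%:Z - b%:Z) theta
       (map (fun s =>
          if [exists i in mu, val i == root s]
          then \sum_(1 <= l1 < l.+1) E beta D theta s l1 n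
          else \sum_(1 <= l1 < (a + b).+1)
                 calE beta D theta s (mu :&: [set i | val i \in labels s]) l1 l n)
         ts).
End Defs.

Definition multilinear (R : realFieldType) (V : lmodType R)
    (D : int -> V -> seq V -> V) : Prop :=
  forall (s : int) (theta : V) (xs ys : seq V) (x y : V) (c : R),
    D s theta (xs ++ (x + y) :: ys) = D s theta (xs ++ x :: ys) + D s theta (xs ++ y :: ys)
    /\ D s theta (xs ++ (c *: x) :: ys) = c *: D s theta (xs ++ x :: ys).

Definition symmetric_args (R : realFieldType) (V : lmodType R)
    (D : int -> V -> seq V -> V) : Prop :=
  forall (s : int) (theta : V) (xs ys : seq V), perm_eq xs ys -> D s theta xs = D s theta ys.

(* Main.v *)
Require Import Defs.
From HB Require Import structures.
From mathcomp Require Import all_boot all_order all_algebra.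
Import Order.TTheory GRing.Theory Num.Theory.
Set Implicit Arguments. Unset Strict Implicit. Unset Printing Implicit Defensive.
Local Open Scope ring_scope.

Local Notation root := Defs.root.

Inductive AllP (P : tree -> Prop) : seq tree -> Prop :=
  AllP_nil : AllP P [::] | AllP_cons s l : P s -> AllP P l -> AllP P (s :: l).

Section TreeInd.
Variable P : tree -> Prop.
Hypothesis H : forall x ts, AllP P ts -> P (Node x ts).
Fixpoint tree_ind' (t : tree) : P t :=
  match t with Node x ts => H x ((fix F (l : seq tree) : AllP P l :=
     match l with [::] => AllP_nil P
     | s :: l' => @AllP_cons P s l' (tree_ind' s) (F l') end) ts) end.
End TreeInd.

Fixpoint enc (t : tree) : GenTree.tree nat :=
  let: Node x ts := t in GenTree.Node x (map enc ts).
Fixpoint dec (g : GenTree.tree nat) : tree :=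
  match g with GenTree.Leaf x => Node x [::]
  | GenTree.Node x gs => Node x (map dec gs) end.
Lemma encK : cancel enc dec.
Proof.
elim/tree_ind' => x ts IH /=; congr Node.
by elim: IH => //= s l' Hs _ ->; rewrite Hs.
Qed.
HB.instance Definition _ := Equality.copy tree (can_type encK).

Lemma ForallP (P : tree -> Prop) ts : AllP P ts -> forall s, s \in ts -> P s.
Proof.
elim=> // s l' Ps _ IH s'; rewrite inE => /orP[/eqP -> // | /IH //].
Qed.

Lemma flat_sub ts y : flatten [seq nonroot_labels s | s <- flatten [seq subtrees i | i <- ts] & root s == y]
   = flatten [seq desc s y | s <- ts].
Proof. by elim: ts => //= s l' IH; rewrite filter_cat map_cat flatten_cat IH. Qed.

Lemma descE x ts y : desc (Node x ts) y =
  (if x == y then flatten (map labels ts) else [::]) ++ flatten (map (fun s => desc s y) ts).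
Proof. by rewrite {1}/desc /=; case: (x == y) => /=; rewrite flat_sub. Qed.

Lemma desc_sub s y j : j \in desc s y -> (y \in labels s) && (j \in labels s).
Proof.
elim/tree_ind': s => x ts IH; rewrite descE mem_cat => /orP[|].
  case: eqP => // <- jf /=; by rewrite inE eqxx inE jf orbT.
case/flatten_mapP => s sts /(ForallP IH sts) /andP[ys js].
rewrite /= !inE; apply/andP; split; apply/orP; right; apply/flatten_mapP; by exists s.
Qed.

Lemma mem_desc_root s j : j \in nonroot_labels s -> j \in desc s (root s).
Proof. by case: s => x ts jn; rewrite descE eqxx mem_cat jn. Qed.

Lemma desc_child x ts s y j : s \in ts -> j \in desc s y -> j \in desc (Node x ts) y.
Proof.
move=> sts jd; rewrite descE mem_cat; apply/orP; right; apply/flatten_mapP; by exists s.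
Qed.

Lemma root_not_desc s : uniq (labels s) -> root s \notin desc s (root s).
Proof.
case: s => r ss /= /andP[rn _]; rewrite descE eqxx mem_cat negb_or rn /=.
apply/flatten_mapP => -[s' s'in /desc_sub /andP[rl _]].
by apply: (negP rn); apply/flatten_mapP; exists s'.
Qed.

Lemma uniq_child ts s : uniq (flatten (map labels ts)) -> s \in ts -> uniq (labels s).
Proof.
elim: ts => //= s' l' IH; rewrite cat_uniq inE => /and3P[u1 _ u2] /orP[/eqP -> //|].
exact: IH.
Qed.

Lemma labels_root s : root s \in labels s.
Proof. by case: s => x ts; rewrite /= inE eqxx. Qed.

Lemma labels_split s y : y \in labels s -> (y == root s) || (y \in nonroot_labels s).
Proof. by case: s => x ts; rewrite /= inE. Qed.

Section Sets.
Variable k : nat.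
Definition Ls (s : tree) : {set 'I_k} := [set i : 'I_k | val i \in labels s].
Definition Us (ts : seq tree) : {set 'I_k} := [set i : 'I_k | val i \in flatten (map labels ts)].
Definition Rs (s : tree) : {set 'I_k} := [set i : 'I_k | val i == root s].
Definition opt (s : tree) (nu : {set 'I_k}) := (nu == Rs s) || is_marking s nu.
Definition fmarkg (O : tree -> {set 'I_k} -> bool) ts (mu : {set 'I_k}) :=
  (mu \subset Us ts) && all (fun s => O s (mu :&: Ls s)) ts.

Lemma marking_split x ts (mu : {set 'I_k}) : uniq (labels (Node x ts)) ->
  is_marking (Node x ts) mu = fmarkg opt ts mu.
Proof.
move=> /= /andP[xnot Uf]; apply/idP/idP.
- move=> /forall_inP Hm; apply/andP; split.
    by apply/subsetP => i imu; rewrite inE; case/andP: (Hm i imu).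
  apply/allP => s sts; rewrite /opt.
  case: (boolP [exists i in mu, val i == root s]) => [/exists_inP [i0 i0mu /eqP i0r] | nex].
    apply/orP; left; apply/eqP/setP => j; rewrite !inE.
    apply/andP/eqP => [[jmu jl]|jr].
      apply/eqP; apply/negP => /negP jr.
      have := labels_split jl; rewrite (negPf jr) /= => /mem_desc_root jd.
      case/andP: (Hm i0 i0mu) => _ /forall_inP /(_ j jmu) /negP; apply.
      by rewrite i0r; apply: desc_child jd.
    have -> : j = i0 by apply: val_inj; rewrite jr i0r.
    by rewrite i0mu i0r labels_root.
  apply/orP; right; apply/forall_inP => i; rewrite !inE => /andP[imu ils].
  have nr : val i \in nonroot_labels s.
    have := labels_split ils; case: eqP => //= ir _; case/negP: nex.
    by apply/exists_inP; exists i => //; apply/eqP.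
  rewrite nr /=; apply/forall_inP => j; rewrite inE => /andP[jmu _].
  apply/negP => jd; case/andP: (Hm i imu) => _ /forall_inP /(_ j jmu) /negP; apply.
  exact: desc_child jd.
- move=> /andP[/subsetP Hsub /allP Hall]; apply/forall_inP => i imu.
  have inr : val i \in nonroot_labels (Node x ts) by move: (Hsub i imu); rewrite inE.
  rewrite inr /=; apply/forall_inP => j jmu; apply/negP; rewrite descE mem_cat.
  case/orP.
    case: eqP => [xi | _] //; move: xnot; rewrite xi.
    by move: inr => /= ->.
  case/flatten_mapP => s sts jd; have /andP[yl jl] := desc_sub jd.
  have iin : i \in mu :&: Ls s by rewrite !inE imu yl.
  have jin : j \in mu :&: Ls s by rewrite !inE jmu jl.
  move: (Hall s sts); rewrite /opt => /orP[/eqP E | M].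
    move: iin jin; rewrite E !inE => /eqP ir /eqP jr.
    move: jd; rewrite ir jr; apply/negP; apply: root_not_desc.
    exact: uniq_child Uf sts.
  move: M => /forall_inP /(_ i iin) /andP[_ /forall_inP /(_ j jin) /negP]; by apply.
Qed.

Lemma split_sum (W : nmodType) (A B : {set 'I_k}) (P Q : pred {set 'I_k}) (h : {set 'I_k} -> W) :
  (forall i, i \in A -> i \in B -> False) ->
  (forall nu, P nu -> nu \subset A) -> (forall rho, Q rho -> rho \subset B) ->
  \sum_(mu : {set 'I_k} | [&& mu \subset A :|: B, P (mu :&: A) & Q (mu :&: B)]) h mu =
  \sum_(nu : {set 'I_k} | P nu) \sum_(rho : {set 'I_k} | Q rho) h (nu :|: rho).
Proof.
move=> dAB PA QB; rewrite pair_big_dep /=.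
rewrite (reindex_onto (fun p : {set 'I_k} * {set 'I_k} => p.1 :|: p.2)
   (fun mu : {set 'I_k} => (mu :&: A, mu :&: B))) /=; last first.
  move=> mu /and3P[/subsetP sub _ _]; apply/setP => i; rewrite !inE.
  by case im: (i \in mu) => //=; move: (sub i im); rewrite inE.
apply: eq_bigl => -[nu rho] /=.
apply/idP/idP.
  move=> /andP[/and3P[_ Pn Qr] /eqP [e1 e2]]; by move: Pn Qr; rewrite e1 e2 => -> ->.
move=> /andP[Pn Qr].
have sn := subsetP (PA _ Pn); have sr := subsetP (QB _ Qr).
have e1 : (nu :|: rho) :&: A = nu.
  apply/setP => i; rewrite !inE; case inu: (i \in nu); first by rewrite (sn i inu).
  by case ir: (i \in rho) => //=; case iA: (i \in A) => //; case: (dAB i iA (sr i ir)).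
have e2 : (nu :|: rho) :&: B = rho.
  apply/setP => i; rewrite !inE; case ir: (i \in rho); first by rewrite orbT (sr i ir).
  by case inu: (i \in nu) => //=; case iB: (i \in B) => //; case: (dAB i (sn i inu) iB).
rewrite e1 e2 Pn Qr eqxx !andbT /=; apply/subsetP => i; rewrite !inE.
by case/orP => [/sn -> | /sr ->]; rewrite ?orbT.
Qed.
End Sets.

Section Main.
Variables (R : realFieldType) (V : lmodType R) (beta : R) (D : int -> V -> seq V -> V).
Hypothesis hlin : multilinear D.
Variables (theta : V) (k : nat).

Lemma D_sum N xs ys (I : Type) (r : seq I) (P : pred I) (F : I -> V) :
  D N theta (xs ++ (\sum_(i <- r | P i) F i) :: ys) = \sum_(i <- r | P i) D N theta (xs ++ F i :: ys).
Proof.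
have g0 : D N theta (xs ++ 0 :: ys) = 0.
  by have := (hlin N theta xs ys 0 0 0).2; rewrite scale0r => ->; rewrite scale0r.
apply: (big_morph (fun x => D N theta (xs ++ x :: ys))) => // x y.
exact: (hlin N theta xs ys x y 0).1.
Qed.

Lemma forest_expand N (O : tree -> {set 'I_k} -> bool) (f : tree -> {set 'I_k} -> V) :
  (forall s nu, O s nu -> nu \subset Ls k s) ->
  forall ts xs, uniq (flatten (map labels ts)) ->
  D N theta (xs ++ map (fun s => \sum_(nu : {set 'I_k} | O s nu) f s nu) ts) =
  \sum_(mu : {set 'I_k} | fmarkg O ts mu) D N theta (xs ++ map (fun s => f s (mu :&: Ls k s)) ts).
Proof.
move=> OL; elim=> [|s ts IH] xs U.
  rewrite (big_pred1 set0) //= => mu; rewrite /fmarkg andbT.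
  apply/idP/eqP => [/subsetP sub | ->]; last exact: sub0set.
  by apply/setP => i; rewrite inE; apply/negP => /sub; rewrite inE.
move: U => /=; rewrite cat_uniq => /and3P[Us1 dis Ut].
have dAB : forall i, i \in Ls k s -> i \in Us k ts -> False.
  move=> i; rewrite !inE => il iu; case/hasP: dis; by exists (val i).
have LU : forall s', s' \in ts -> Ls k s' \subset Us k ts.
  move=> s' s'in; apply/subsetP => i; rewrite !inE => il; apply/flatten_mapP; by exists s'.
rewrite D_sum.
transitivity (\sum_(i : {set 'I_k} | O s i) \sum_(rho : {set 'I_k} | fmarkg O ts rho)
   D N theta (rcons xs (f s i) ++ map (fun s' => f s' (rho :&: Ls k s')) ts)).
  apply: eq_big => // i _; rewrite -cat_rcons IH //.
rewrite [in RHS](eq_bigl (fun mu : {set 'I_k} => [&& mu \subset Ls k s :|: Us k ts, O s (mu :&: Ls k s)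
                              & fmarkg O ts (mu :&: Us k ts)])); last first.
  move=> mu; rewrite /fmarkg /= subsetIr /=.
  have -> : Us k (s :: ts) = Ls k s :|: Us k ts by apply/setP => i; rewrite !inE mem_cat.
  congr [&& _, _ & _]; apply: eq_in_all => s' s'in.
  by rewrite -setIA (setIidPr (LU s' s'in)).
rewrite [in RHS](split_sum _ _ (P := O s) (Q := fmarkg O ts)); last first.
- by move=> rho /andP[].
- exact: OL.
- exact: dAB.
apply: eq_big => // nu On; apply: eq_big => // rho Fr; rewrite cat_rcons.
have sn := subsetP (OL _ _ On); have sr : {subset rho <= Us k ts} by apply/subsetP; case/andP: Fr.
have e1 : (nu :|: rho) :&: Ls k s = nu.
  apply/setP => i; rewrite in_setI in_setU; case inu: (i \in nu); first by rewrite (sn i inu).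
  by case ir: (i \in rho) => //=; case iA: (i \in Ls k s) => //; case: (dAB i iA (sr i ir)).
rewrite e1; congr (D N theta (xs ++ _ :: _)); apply/(@eq_in_map (tree : eqType)) => s' s'in /=.
congr (f s' _); apply/setP => i; rewrite !in_setI !in_setU.
case inu: (i \in nu) => //=; case ir: (i \in rho) => //=.
apply/esym/negP => il; apply: (dAB i (sn i inu)); exact: (subsetP (LU s' s'in)).
Qed.

Variables (l : nat) (n : int).
Definition Asum s := \sum_(1 <= l1 < l.+1) E beta D theta s l1 n.
Definition fk c s (nu : {set 'I_k}) := if [exists i in nu, val i == root s] then Asum s
  else \sum_(1 <= l1 < c.+1) calE beta D theta s nu l1 l n.

Lemma key t : uniq (labels t) -> (forall y, y \in labels t -> y < k)%N -> forall a,
  E beta D theta t (l + a) n =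
  \sum_(mu : {set 'I_k} | is_marking t mu) calE beta D theta t mu a l n.
Proof.
elim/tree_ind': t => x ts IH U Lk a.
have Uf : uniq (flatten (map labels ts)) by case/andP: U.
rewrite /= [RHS]exchange_big /=.
have eN : n - (l + a)%:Z = n - l%:Z - a%:Z by rewrite PoszD opprD addrA.
rewrite eN; apply: eq_big => // b _; rewrite -scaler_sumr; congr (_ *: _).
set N := (n - l%:Z - a%:Z - b%:Z).
rewrite (eq_bigl (fmarkg (@opt k) ts)); last by move=> mu; apply: marking_split.
transitivity (\sum_(mu : {set 'I_k} | fmarkg (@opt k) ts mu)
   D N theta ([::] ++ map (fun s => fk (a + b) s (mu :&: Ls k s)) ts)); last first.
  apply: eq_big => // mu _; congr (D N theta _); apply: eq_map => s /=.
  rewrite /fk; congr (if _ then _ else _).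
  apply/exists_inP/exists_inP => -[i im ir]; exists i => //.
    by move: im; rewrite !inE; case/andP.
  rewrite !inE im /=.
  have -> : \val i = root s by apply/eqP.
  exact: labels_root.
rewrite -forest_expand //; last first.
  move=> s nu /orP[/eqP -> | /forall_inP M]; apply/subsetP => i; rewrite !inE.
    by move/eqP => ->; apply: labels_root.
  by move=> /M /andP[nr _]; case: s nr {M} => y ss nr; rewrite /= inE nr orbT.
congr (D N theta _); apply/(@eq_in_map (tree : eqType)) => s sts /=.
have Us : uniq (labels s) := uniq_child Uf sts.
have Lks : forall y, y \in labels s -> (y < k)%N.
  move=> y ys; apply: Lk; rewrite /= inE; apply/orP; right; apply/flatten_mapP; by exists s.
have IHs := ForallP IH sts Us Lks.
have rk : (root s < k)%N := Lks _ (labels_root s).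
have rn : root s \notin nonroot_labels s by case: (s) Us => y ss /= /andP[].
rewrite (bigD1 (Rs k s)) /=; last by rewrite /opt eqxx.
have -> : fk (a + b) s (Rs k s) = Asum s.
  rewrite /fk; have -> // : [exists i in Rs k s, val i == root s].
  by apply/exists_inP; exists (Ordinal rk); rewrite ?inE.
rewrite (eq_bigl (fun nu => is_marking s nu)); last first.
  move=> nu; rewrite /opt; case: eqP => [-> | ne] /=; last by rewrite andbT.
  apply/esym/negP => /forall_inP /(_ (Ordinal rk)); rewrite inE eqxx => /(_ isT) /andP[nr _].
  by rewrite nr in rn.
rewrite (eq_bigr (fun nu => \sum_(1 <= l1 < (a + b).+1) calE beta D theta s nu l1 l n)); last first.
  move=> nu M; rewrite /fk; have -> // : [exists i in nu, val i == root s] = false.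
  apply/negbTE/negP => /exists_inP [i inu /eqP ir].
  move/forall_inP: M => /(_ i inu) /andP[]; rewrite /= ir.
  by rewrite (negPf rn).
rewrite exchange_big /= /Asum (big_cat_nat _ (n := l.+1)) //; last first.
  by rewrite ltnS -addnA leq_addr.
congr (_ + _).
rewrite -[l.+1]add1n big_addn.
have -> : ((l + a + b).+1 - l = (a + b).+1)%N by rewrite -addnA -addnS addKn.
by apply: eq_big_nat => i _; rewrite addnC IHs.
Qed.
End Main.

Unset Implicit Arguments.
Theorem mainTheorem6 (R : realFieldType) (V : lmodType R) (beta : R)
    (D : int -> V -> seq V -> V)
    (hbeta : 0 < beta < 1)
    (hlin : multilinear D) (hsym : symmetric_args D)
    (m : nat) (t : tree) (hm : (2 <= m)%N) (ht : wf_tree m t)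
    (theta : V) (n : int) (l a : nat) (hl : (1 <= l)%N) (ha : (1 <= a)%N) :
  E beta D theta t (l + a) n =
  \sum_(mu : {set 'I_m.+1} | is_marking t mu) calE beta D theta t mu a l n.
Proof.
apply: key => //; first by rewrite (perm_uniq ht) iota_uniq.
by move=> y; rewrite (perm_mem ht) mem_iota add1n => /andP[_].
Qed.
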